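(* Let $1\le p<\infty$. The Hamming graphs $([\mathbb N]^k,d^{(k)}_{\mathsf H})$, $k\in\mathbb N$, equi-coarsely embed into the Banach space $\big(\bigoplus_{k=1}^\infty\ell_p^k(T^* )\big)_{T^*}$.
   Context: $d^{(k)}_{\mathsf H}(\bar m,\bar n)=|\{j:m_j\ne n_j\}|$ for $\bar m=\{m_1<\dots<m_k\},\bar n=\{n_1<\dots<n_k\}\in[\mathbb N]^k$. $T^*$ is the dual of Tsirelson's space $T$ (completion of $c_{00}$ under $\|x\|_T=\max\{\|x\|_\infty,\frac12\sup\sum_{j=1}^n\|E_j(x)\|_T\}$, supremum over $n$ and finite sets $n\le E_1<\dots<E_n$), with its $1$-unconditional basis $(e_j)$. $\ell_p^k(T^* )$ is the $\ell_p^k$-sum of $k$ copies of $T^*$; $(\bigoplus Y_k)_{T^*}$ consists of $(y_k)$ with $\sum\|y_k\|e_k$ convergent in $T^*$, normed by $\|\sum\|y_k\|e_k\|_{T^*}$. A family $(M_i)$ of metric spaces equi-coarsely embeds into $Y$ if there are non-decreasing $\rho,\omega:[0,\infty)\to[0,\infty)$ with $\lim_{t\to\infty}\rho(t)=\infty$ and maps $f_i:M_i\to Y$ with $\rho(d(x,y))\le d_Y(f_i(x),f_i(y))\le\omega(d(x,y))$ for all $i$ and $x,y\in M_i$. *)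

(* Defs.v *)
From HB Require Import structures.
From mathcomp Require Import all_boot all_order all_algebra.
From mathcomp Require Import all_classical all_reals all_analysis.
Set Implicit Arguments. Unset Strict Implicit. Unset Printing Implicit Defensive.
Import Order.TTheory GRing.Theory Num.Theory.
Local Open Scope classical_set_scope.
Local Open Scope ring_scope.

Section Defs.
Variable R : realType.

(* Indexing convention: a real sequence x : nat -> R has coordinate j standing
   for the coefficient of the (j+1)-th unit vector e_(j+1). *)

Definition c00 (x : nat -> R) : Prop :=
  exists N : nat, forall j : nat, (N <= j)%N -> x j = 0.

Definition restrict (E : seq nat) (x : nat -> R) : nat -> R :=
  fun j => if j \in E then x j else 0.

Definition supnorm (x : nat -> R) : R := sup (range (fun j => `|x j|)).

(** Es = [E_1; ...; E_n] are finite, nonempty sets (strictly increasing lists)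
    with E_1 < E_2 < ... < E_n and n <= min E_1 (1-based indices, i.e.
    n <= head E_1 + 1 in our 0-based coordinates). *)
Definition admissible (Es : seq (seq nat)) : bool :=
  [&& all (fun E => (E != [::]) && sorted ltn E) Es,
      sorted (fun E F => (last 0%N E < head 0%N F)%N) Es &
      (if Es is E1 :: _ then (size Es <= (head 0%N E1).+1)%N else true)].

(** Figiel–Johnson iteration producing Tsirelson's norm:
    |x|_0 = |x|_oo,
    |x|_(m+1) = max(|x|_m, 1/2 sup sum_j |E_j x|_m) over admissible (E_j). *)
Fixpoint tsi_iter (m : nat) (x : nat -> R) : R :=
  match m with
  | 0 => supnorm x
  | m'.+1 => Num.max (tsi_iter m' x)
      (2^-1 * sup [set (\sum_(E <- Es) tsi_iter m' (restrict E x))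
                  | Es in [set Es | admissible Es]])
  end.

(** Tsirelson's norm on c00: the (increasing) limit of the iterates, i.e. the
    unique norm on c00 with
    |x|_T = max{ |x|_oo, 1/2 sup sum_j |E_j x|_T }. *)
Definition Tnorm (x : nat -> R) : R := sup (range (fun m => tsi_iter m x)).

(** The unit ball of (c00, |.|_T) paired against y: T is the completion of c00,
    so a functional on T is a sequence y bounded on this set. *)
Definition Tdual_pairings (y : nat -> R) : set R :=
  [set r | exists (x : nat -> R) (N : nat),
     (forall j, (N <= j)%N -> x j = 0) /\ Tnorm x <= 1 /\
     r = `| \sum_(j < N) y j * x j |].

Definition in_Tdual (y : nat -> R) : Prop := has_ubound (Tdual_pairings y).

Definition Tdual_norm (y : nat -> R) : R := sup (Tdual_pairings y).

Definition partial_seq (a : nat -> R) (N : nat) : nat -> R :=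
  fun j => if (j < N)%N then a j else 0.

Definition Tdual_series_converges (a : nat -> R) : Prop :=
  exists y : nat -> R, in_Tdual y /\
    (fun N => Tdual_norm (fun j => y j - partial_seq a N j)) @ \oo --> 0.

(** l_p^k(T^* ): u : nat -> (nat -> R), coordinates u 0, ..., u (k-1) in T^* *)
Definition lpk_norm (p : R) (k : nat) (u : nat -> nat -> R) : R :=
  (\sum_(i < k) (Tdual_norm (u i)) `^ p) `^ (p^-1).

(** An element is z : nat -> nat -> nat -> R
    where block b (b : nat) is the l_p^(b+1)(T^* ) component (k = b+1),
    placed on the basis vector e_(b+1) = e_k of T^*; its coordinates are
    z b 0, ..., z b b.  (Entries z b i with i > b are ignored.) *)
Definition Z_block_norms (p : R) (z : nat -> nat -> nat -> R) : nat -> R :=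
  fun b => lpk_norm p b.+1 (z b).

Definition Z_mem (p : R) (z : nat -> nat -> nat -> R) : Prop :=
  (forall b i : nat, (i <= b)%N -> in_Tdual (z b i)) /\
  Tdual_series_converges (Z_block_norms p z).

Definition Z_norm (p : R) (z : nat -> nat -> nat -> R) : R :=
  Tdual_norm (Z_block_norms p z).

Definition Z_dist (p : R) (z z' : nat -> nat -> nat -> R) : R :=
  Z_norm p (fun b i j => z b i j - z' b i j).

Definition equi_coarse_embeds (I : Type) (X : I -> Type)
  (dom : forall i, X i -> Prop) (d : forall i, X i -> X i -> R)
  (Y : Type) (memY : Y -> Prop) (dY : Y -> Y -> R) : Prop :=
  exists (rho omega : R -> R),
    (forall t, 0 <= t -> 0 <= rho t) /\ (forall t, 0 <= t -> 0 <= omega t) /\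
    (forall s t, 0 <= s -> s <= t -> rho s <= rho t) /\
    (forall s t, 0 <= s -> s <= t -> omega s <= omega t) /\
    (forall M : R, exists t0 : R, forall t, t0 <= t -> M <= rho t) /\
    exists f : forall i, X i -> Y,
      forall i (x y : X i), dom i x -> dom i y ->
        memY (f i x) /\
        rho (d i x y) <= dY (f i x) (f i y) <= omega (d i x y).

End Defs.

(** [N]^k: k-element subsets {m_1 < ... < m_k} of N, as strictly increasing
    lists of length k. *)
Definition hamming_pt (k : nat) (s : seq nat) : bool :=
  (size s == k) && sorted ltn s.

Definition hamming_dist (s t : seq nat) : nat :=
  \sum_(j < size s) (nth 0%N s j != nth 0%N t j).

(* Main.v *)
Require Import Defs.
From mathcomp Require Import all_boot all_order all_algebra.
From mathcomp Require Import all_classical all_reals all_analysis.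
From HB Require Import structures.
From mathcomp Require Import lra.
Set Implicit Arguments. Unset Strict Implicit. Unset Printing Implicit Defensive.
Import Order.TTheory GRing.Theory Num.Theory.
Local Open Scope classical_set_scope.
Local Open Scope ring_scope.



Lemma path_le_last (a : nat) F j : path ltn a F -> j \in a :: F -> (j <= last a F)%N.
Proof.
elim: F a j => [|b F IH] a j /=; first by rewrite inE => _ /eqP->.
move=> /andP[ab pb]; rewrite inE => /orP[/eqP->|jb].
  by apply: leq_trans (ltnW ab) (IH b b pb _); rewrite inE eqxx.
exact: IH.
Qed.

Lemma sorted_head_le (F : seq nat) j : sorted ltn F -> j \in F -> (head 0%N F <= j)%N.
Proof.
case: F => // a F /= /(order_path_min ltn_trans) /allP H.
by rewrite inE => /orP[/eqP->//|/H /ltnW].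
Qed.

Definition goodE (E : seq nat) := (E != [::]) && sorted ltn E.
Definition relE (E F : seq nat) := (last 0%N E < head 0%N F)%N.

Lemma goodE_last E j : goodE E -> j \in E -> (j <= last 0%N E)%N.
Proof. by case: E => // a E /andP[_ /= pE] jE; exact: path_le_last. Qed.

Lemma goodE_head E j : goodE E -> j \in E -> (head 0%N E <= j)%N.
Proof. by move=> /andP[_ sE]; exact: sorted_head_le. Qed.

Lemma path_all_gt E0 Es : path relE E0 Es -> all goodE Es ->
  forall F, F \in Es -> forall j, j \in F -> (last 0%N E0 < j)%N.
Proof.
elim: Es E0 => // E Es IH E0 /= /andP[r0 pE] /andP[gE gEs] F.
rewrite inE => /orP[/eqP-> j jE|FEs j jF].
  exact: leq_trans r0 (goodE_head gE jE).
apply: leq_trans r0 _.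
have hl : (head 0%N E <= last 0%N E)%N.
  by apply: goodE_last => //; case: E gE {pE IH} => //= a E _; rewrite inE eqxx.
exact: leq_trans hl (ltnW (IH E pE gEs F FEs j jF)).
Qed.

Lemma count_le1 Es j : sorted relE Es -> all goodE Es ->
  (count (fun E => j \in E) Es <= 1)%N.
Proof.
elim: Es => //= E Es IH pE /andP[gE gEs].
case: (boolP (j \in E)) => jE /=; last first.
  by rewrite add0n; apply: IH => //; exact: path_sorted pE.
rewrite -[X in (_ <= X)%N]addn0 leq_add2l leqNgt -has_count.
apply/hasPn => F FEs; apply/negP => jF.
have := path_all_gt pE gEs FEs jF.
by rewrite ltnNge (goodE_last gE jE).
Qed.



Section T.
Variable R : realType.
Implicit Types x y : nat -> R.

Definition supp x N := forall j, (N <= j)%N -> x j = 0.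
Definition l1 x N := \sum_(j < N) `|x j|.

Lemma l1_ge0 x N : 0 <= l1 x N.
Proof. exact: sumr_ge0. Qed.

Lemma abs_le_l1 x N j : supp x N -> `|x j| <= l1 x N.
Proof.
move=> Hs; case: (ltnP j N) => jN.
  rewrite /l1 (bigD1 (Ordinal jN)) //= lerDl; exact: sumr_ge0.
by rewrite (Hs j jN) normr0; exact: l1_ge0.
Qed.

Lemma supp_restrict E x N : supp x N -> supp (Defs.restrict E x) N.
Proof. by move=> Hs j jN; rewrite /Defs.restrict; case: ifP => // _; exact: Hs. Qed.

Lemma sum_restrict Es x j : \sum_(E <- Es) `|Defs.restrict E x j| =
  (count (fun E => j \in E) Es)%:R * `|x j|.
Proof.
elim: Es => [|E Es IH]; first by rewrite big_nil mul0r.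
rewrite big_cons IH /Defs.restrict /=; case: (j \in E) => /=.
  by rewrite natrD mulrDl mul1r.
by rewrite normr0 add0r add0n.
Qed.

Lemma tsi_l1 m : forall x N, supp x N -> tsi_iter m x <= l1 x N.
Proof.
elim: m => [|m IH] x N Hs /=.
  rewrite /supnorm; apply: ge_sup; first by exists `|x 0%N|, 0%N.
  by move=> r [j _ <-]; exact: abs_le_l1.
rewrite ge_max IH //=.
set S := sup _.
have HS : S <= l1 x N.
  apply: ge_sup; first by exists 0; exists [::] => //; rewrite big_nil.
  move=> r [Es adm <-].
  have [sEs gEs] : sorted relE Es /\ all goodE Es.
    by move: adm; rewrite /admissible => /and3P[].
  apply: le_trans (_ : \sum_(E <- Es) l1 (Defs.restrict E x) N <= _).
    by apply: ler_sum => E _; apply: IH; exact: supp_restrict.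
  rewrite /l1 exchange_big /=; apply: ler_sum => j _.
  rewrite sum_restrict.
  have := count_le1 j sEs gEs.
  case: (count _ _) => [|[|]] //= _; by rewrite ?mul0r ?mul1r.
have := l1_ge0 x N; lra.
Qed.
End T.



Section T2.
Variable R : realType.
Implicit Types x y : nat -> R.

Lemma tsi_bounded x N : supp x N -> has_ubound (range (fun m => tsi_iter m x)).
Proof. by move=> Hs; exists (l1 x N) => r [m _ <-]; exact: tsi_l1. Qed.

Lemma Tnorm_le_l1 x N : supp x N -> Tnorm x <= l1 x N.
Proof.
move=> Hs; apply: ge_sup; first by exists (tsi_iter 0 x), 0%N.
by move=> r [m _ <-]; exact: tsi_l1.
Qed.

Lemma abs_le_Tnorm x N j : supp x N -> `|x j| <= Tnorm x.
Proof.
move=> Hs; apply: le_trans (_ : tsi_iter 0 x <= _).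
  rewrite /= /supnorm; apply: (ub_le_sup); last by exists j.
  by exists (l1 x N) => r [i _ <-]; exact: abs_le_l1.
by apply: (ub_le_sup (tsi_bounded Hs)); exists 0%N.
Qed.

Definition ev (a : nat) : nat -> R := fun j => (j == a)%:R.

Lemma supp_ev a : supp (ev a) a.+1.
Proof. by move=> j ja; rewrite /ev; case: eqP ja => [->|]; rewrite ?ltnn. Qed.

Lemma Tnorm_ev a : Tnorm (ev a) <= 1.
Proof.
apply: le_trans (Tnorm_le_l1 (supp_ev (a:=a))) _.
rewrite /l1 big_ord_recr /= /ev eqxx normr1 big1 ?add0r // => i _.
by rewrite (ltn_eqF (ltn_ord i)) normr0.
Qed.

Lemma sum_ev a x N : supp x N -> \sum_(j < N) ev a j * x j = x a.
Proof.
move=> Hs; case: (ltnP a N) => aN.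
  rewrite (bigD1 (Ordinal aN)) //= /ev eqxx mul1r big1 ?addr0 // => i.
  by rewrite -val_eqE /= => /negbTE ->; rewrite mul0r.
rewrite big1 ?Hs // => i _; rewrite /ev.
by rewrite (ltn_eqF (leq_trans (ltn_ord i) aN)) mul0r.
Qed.

Definition frm y (al be : R) a b := forall j, y j = al * ev a j + be * ev b j.

Lemma pair_form y al be a b x N : frm y al be a b -> supp x N ->
  \sum_(j < N) y j * x j = al * x a + be * x b.
Proof.
move=> Hy Hs.
rewrite (eq_bigr (fun j : 'I_N => al * (ev a j * x j) + be * (ev b j * x j))).
  by rewrite big_split /= -!mulr_sumr !sum_ev.
by move=> i _; rewrite Hy mulrDl !mulrA.
Qed.

Lemma Tdual_ub y al be a b : frm y al be a b ->
  ubound (Tdual_pairings y) (`|al| + `|be|).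
Proof.
move=> Hy r [x [N [Hs [Hx ->]]]]; rewrite (pair_form Hy Hs).
apply: le_trans (ler_normD _ _) _; rewrite !normrM.
have ha := le_trans (abs_le_Tnorm a Hs) Hx.
have hb := le_trans (abs_le_Tnorm b Hs) Hx.
apply: lerD; rewrite -[X in _ <= X]mulr1; apply: ler_wpM2l => //.
Qed.

Lemma in_Tdual_form y al be a b : frm y al be a b -> in_Tdual y.
Proof. by move=> Hy; exists (`|al| + `|be|); exact: Tdual_ub Hy. Qed.

Lemma Tdual_norm_le y al be a b : frm y al be a b ->
  Tdual_norm y <= `|al| + `|be|.
Proof.
move=> Hy; apply: ge_sup; last exact: Tdual_ub Hy.
exists `| \sum_(j < 0) y j * (fun _ => 0 : R) j|; exists (fun _ => 0), 0%N.
split => //; split => //.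
by apply: le_trans (Tnorm_le_l1 (N:=0%N) _) _ => //; rewrite /l1 big_ord0.
Qed.

Lemma Tdual_norm_ge y al be a b c : frm y al be a b ->
  `|al * ev c a + be * ev c b| <= Tdual_norm y.
Proof.
move=> Hy; apply: (ub_le_sup (in_Tdual_form Hy)).
exists (ev c), c.+1; split; first exact: (supp_ev (a:=c)).
split; first exact: Tnorm_ev.
by rewrite (pair_form Hy (supp_ev (a:=c))).
Qed.

Lemma Tdual_zero y : (forall j, y j = 0) -> Tdual_norm y = 0.
Proof.
move=> Hy; have Hf : frm y 0 0 0 0 by move=> j; rewrite Hy !mul0r addr0.
apply/eqP; rewrite eq_le; apply/andP; split.
  by have := Tdual_norm_le Hf; rewrite normr0 addr0.
by have := Tdual_norm_ge 0 Hf; rewrite !mul0r addr0 normr0.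
Qed.
End T2.



Section T3.
Variable R : realType.
Variable p : R.
Hypothesis hp : 1 <= p.

Lemma p_gt0 : 0 < p. Proof. exact: lt_le_trans ltr01 hp. Qed.
Lemma p_neq0 : p != 0. Proof. by rewrite gt_eqF // p_gt0. Qed.
Lemma pinv_ge0 : 0 <= p^-1. Proof. by rewrite invr_ge0 ltW // p_gt0. Qed.
Lemma pinv_neq0 : p^-1 != 0. Proof. by rewrite invr_eq0 p_neq0. Qed.
Lemma pinv_le1 : p^-1 <= 1. Proof. by rewrite invf_le1 ?p_gt0. Qed.

Lemma lpk_zero n (u : nat -> nat -> R) : (forall i j, u i j = 0) -> lpk_norm p n u = 0.
Proof.
move=> Hu; rewrite /lpk_norm big1 ?powR0 ?pinv_neq0 // => i _.
by rewrite Tdual_zero ?powR0 ?p_neq0.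
Qed.

Lemma block_form (z : nat -> nat -> nat -> R) b0 :
  (forall b, b != b0 -> forall i j, z b i j = 0) ->
  frm (Z_block_norms p z) (Z_block_norms p z b0) 0 b0 0.
Proof.
move=> Hz j; rewrite mul0r addr0 /ev; case: (eqVneq j b0) => [->|jb].
  by rewrite mulr1.
by rewrite mulr0 /Z_block_norms lpk_zero //; exact: Hz.
Qed.

Lemma series_form (w : nat -> R) v b0 : frm w v 0 b0 0 -> Tdual_series_converges w.
Proof.
move=> Hw; exists w; split; first exact: in_Tdual_form Hw.
apply: (cvg_near_cst 0); near=> N.
have HN : (b0 < N)%N by near: N; exists b0.+1.
apply: Tdual_zero => j; rewrite /partial_seq; case: ifP => jN; first by rewrite subrr.
rewrite subr0 Hw /ev mul0r addr0.
have -> : (j == b0) = false.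
  by apply/negP => /eqP jb; move: jN; rewrite jb HN.
by rewrite mulr0.
Unshelve. all: end_near.
Qed.

Lemma Tdual_norm_single (w : nat -> R) v b0 : frm w v 0 b0 0 -> Tdual_norm w = `|v|.
Proof.
move=> Hw; apply/eqP; rewrite eq_le; apply/andP; split.
  by have := Tdual_norm_le Hw; rewrite normr0 addr0.
by have := Tdual_norm_ge b0 Hw; rewrite /ev eqxx mulr1 mul0r addr0.
Qed.

Lemma powR_inv_le L : 0 <= L -> L `^ p^-1 <= 1 + L.
Proof.
move=> L0; case: (lerP L 1) => L1.
  apply: le_trans (_ : 1 `^ p^-1 <= _).
    by apply: ge0_ler_powR; rewrite ?pinv_ge0 ?nnegrE //.
  by rewrite powR1; lra.
apply: le_trans (ler1_powR (ltW L1) pinv_le1) _; lra.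
Qed.

End T3.



Section T4.
Variable R : realType.
Variable p : R.
Hypothesis hp : 1 <= p.

Definition fz (k : nat) (s : seq nat) : nat -> nat -> nat -> R :=
  fun b i j => ((b.+1 == k) && (i < k)%N)%:R * ev R (nth 0%N s i) j.

Lemma fz_out k s b : b != k.-1 -> forall i j, fz k s b i j = 0.
Proof.
move=> bk i j; rewrite /fz.
have -> : (b.+1 == k) = false.
  by case: k bk => //= k bk; rewrite eqSS (negbTE bk).
by rewrite mul0r.
Qed.

Lemma Z_mem_fz k s : Z_mem p (fz k s).
Proof.
split.
  move=> b i _; apply: (@in_Tdual_form R _ (((b.+1 == k) && (i < k)%N)%:R) 0 (nth 0%N s i) 0%N).
  by move=> j; rewrite /fz mul0r addr0.
apply: series_form; apply: (block_form hp (b0 := k.-1)); exact: fz_out.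
Qed.

End T4.



Lemma dist_bounds (R : realType) (p : R) (hp : 1 <= p) k s t :
  hamming_pt k s -> hamming_pt k t ->
  ((hamming_dist s t)%:R `^ p^-1 <= Z_dist p (fz R k s) (fz R k t)) /\
  (Z_dist p (fz R k s) (fz R k t) <= 1 + 2 `^ p * (hamming_dist s t)%:R).
Proof.
move=> /andP[/eqP Hs _] /andP[/eqP Ht _].
set D := fun b i j => fz R k s b i j - fz R k t b i j.
have HD : forall b, b != k.-1 -> forall i j, D b i j = 0.
  by move=> b bk i j; rewrite /D !fz_out // subrr.
have Hw := block_form hp HD.
rewrite /Z_dist /Z_norm -/D (Tdual_norm_single Hw).
set V := Z_block_norms p D k.-1.
have V0 : 0 <= V by exact: powR_ge0.
rewrite ger0_norm //.
rewrite /hamming_dist Hs.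
case: k Hs Ht @D HD Hw @V V0 => [|k] Hs Ht D HD Hw V V0.
  rewrite big_ord0 powR0 ?pinv_neq0 // mulr0 addr0.
  have -> : V = 0.
    by rewrite /V /Z_block_norms lpk_zero // => i j; rewrite /D /fz /= !mul0r subrr.
  by split => //; lra.
set c := fun i : 'I_k.+1 => Tdual_norm (D k i).
have Hc : forall i : 'I_k.+1, (nth 0%N s i == nth 0%N t i) -> c i = 0.
  move=> i /eqP e; apply: Tdual_zero => j.
  by rewrite /D /fz e subrr.
have Hf : forall i : 'I_k.+1, frm (D k i) 1 (-1) (nth 0%N s i) (nth 0%N t i).
  by move=> i j; rewrite /D /fz /= eqxx ltn_ord /= !mul1r mulN1r.
have Hc1 : forall i : 'I_k.+1, (nth 0%N s i != nth 0%N t i) -> 1 <= c i <= 2.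
  move=> i ne; apply/andP; split.
    have := Tdual_norm_ge (nth 0%N s i) (Hf i).
    by rewrite /ev eqxx eq_sym (negbTE ne) mulr0 addr0 mulr1 normr1.
  by have := Tdual_norm_le (Hf i); rewrite normrN normr1.
have HV : V = (\sum_(i < k.+1) c i `^ p) `^ p^-1 by [].
set L := \sum_(i < k.+1) c i `^ p.
have L0 : 0 <= L by apply: sumr_ge0 => i _; exact: powR_ge0.
rewrite natr_sum.
have dL : \sum_(i < k.+1) ((nth 0%N s i != nth 0%N t i) : nat)%:R <= L.
  apply: ler_sum => i _; case: (boolP (_ != _)) => ne /=; last exact: powR_ge0.
  have /andP[c1 _] := Hc1 i ne.
  by apply: le_trans (le1r_powR c1 hp); rewrite c1.
have Ld : L <= 2 `^ p * \sum_(i < k.+1) ((nth 0%N s i != nth 0%N t i) : nat)%:R.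
  rewrite mulr_sumr; apply: ler_sum => i _.
  case: (boolP (_ != _)) => ne /=.
    have /andP[c1 c2] := Hc1 i ne; rewrite mulr1.
    by apply: ge0_ler_powR; rewrite ?nnegrE ?(ltW p_gt0) //; lra.
  by rewrite mulr0 (Hc i) ?powR0 ?p_neq0 // (negbNE ne).
split.
  rewrite HV; apply: ge0_ler_powR; rewrite ?nnegrE ?pinv_ge0 //.
  by apply: sumr_ge0 => i _.
apply: le_trans (powR_inv_le hp L0) _; lra.
Qed.

Local Close Scope classical_set_scope.
Unset Implicit Arguments.

Theorem proposition4p2 (R : realType) (p : R) (hp : 1 <= p) :
  @equi_coarse_embeds R nat (fun _ : nat => seq nat)
    (fun k s => hamming_pt k s)
    (fun _ s t => (hamming_dist s t)%:R)
    (nat -> nat -> nat -> R)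
    (@Z_mem R p) (@Z_dist R p).
Proof.
have p0 := ltW (p_gt0 hp).
have h2 : 0 <= 2 `^ p by exact: powR_ge0.
exists (fun t => t `^ p^-1), (fun t => 1 + 2 `^ p * t).
split; first by move=> t _; exact: powR_ge0.
split; first by move=> t t0; apply: addr_ge0 => //; exact: mulr_ge0.
split.
  move=> s t s0 st; apply: ge0_ler_powR; rewrite ?nnegrE ?pinv_ge0 //.
  exact: le_trans st.
split; first by move=> s t _ st; rewrite lerD2l ler_wpM2l.
split.
  move=> M; exists ((Num.max M 1) `^ p) => t tt.
  have m0 : 0 <= Num.max M 1 by rewrite le_max ler01 orbT.
  have t0 : 0 <= t by exact: le_trans (powR_ge0 _ _) tt.
  apply: le_trans (_ : (Num.max M 1 `^ p) `^ p^-1 <= _).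
    by rewrite -powRrM mulfV ?p_neq0 // powRr1 // le_max lexx.
  by apply: ge0_ler_powR; rewrite ?nnegrE ?pinv_ge0 ?powR_ge0.
exists (fun k s => fz R k s) => k s t hs ht; split; first exact: Z_mem_fz.
by apply/andP; exact: dist_bounds.
Qed.
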